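(* Let $A\to M$ be a vector bundle of rank at least $n$. Let $\widehat{\xi}^1,\dots,\widehat{\xi}^n\in\Gamma(A^* )$ be linearly independent over $C^\infty(M)$ and let $\widehat{X}_1,\dots,\widehat{X}_n$ be covariant differential operators on $A$ with symbols $\widehat{x}_1,\dots,\widehat{x}_n\in\Gamma(TM)$. Define $a_A(y)=\sum_i\langle y,\widehat{\xi}^i\rangle\widehat{x}_i$ and $$[y,z]_A=\sum_{i=1}^n\Big(\langle y,\widehat{\xi}^i\rangle\widehat{X}_i(z)-\langle z,\widehat{\xi}^i\rangle\widehat{X}_i(y)\Big),\qquad y,z\in\Gamma(A).$$ Suppose there are $a_{ik}^j\in C^\infty(M)$ such that for all $i,j$ $$\widehat{X}_i(\widehat{\xi}^j)=\sum_k a_{ik}^j\widehat{\xi}^k,\qquad [\widehat{x}_i,\widehat{x}_j]=\sum_k\big(a_{ji}^k-a_{ij}^k\big)\widehat{x}_k .$$ Then $(A,[\cdot,\cdot]_A,a_A)$ is a dull algebroid.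
   Context: A covariant differential operator on $A$ is an $\mathbb{R}$-linear map $\widehat{X}:\Gamma(A)\to\Gamma(A)$ with a vector field $\widehat{x}$ (its symbol) such that $\widehat{X}(fy)=f\widehat{X}(y)+\widehat{x}(f)y$; it acts on $\Gamma(A^* )$ by $\langle\widehat{X}(\xi),y\rangle=\widehat{x}\langle\xi,y\rangle-\langle\xi,\widehat{X}(y)\rangle$. A dull algebroid is a triple $(A,[\cdot,\cdot],a_A)$ with $a_A:A\to TM$ a bundle map and $[\cdot,\cdot]$ a skew-symmetric $\mathbb{R}$-bilinear bracket on $\Gamma(A)$ satisfying $[x,fy]=f[x,y]+a_A(x)(f)y$ and $a_A([x,y])=[a_A(x),a_A(y)]$. *)

(* Defs.v *)
(* Algebraic model of the smooth setting:
   R      : the scalar field (R in the paper),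
   C      : commutative R-algebra playing the role of C^oo(M),
   V      : C-module playing the role of Gamma(A),
   covectors (elements of Gamma(A^* )) : C-linear maps V -> C,
   vector fields (Gamma(TM)) : R-linear derivations C -> C,
   Lie bracket of vector fields : commutator of derivations. *)
From HB Require Import structures.
From mathcomp Require Import all_boot all_order all_algebra.
Set Implicit Arguments. Unset Strict Implicit. Unset Printing Implicit Defensive.
Import Order.TTheory GRing.Theory.
Local Open Scope ring_scope.

Section Defs.
Variables (R : fieldType) (C : comAlgType R) (V : lmodType C).

Definition is_vector_field (d : C -> C) : Prop :=
  (forall (r : R) (f g : C), d (r *: f + g) = r *: d f + d g) /\
  (forall f g : C, d (f * g) = f * d g + d f * g).

Definition vf_bracket (d e : C -> C) : C -> C := fun f => d (e f) - e (d f).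

(* section of A^* : C-linear map Gamma(A) -> C; pairing <y, xi> = xi y *)
Definition is_covector (xi : V -> C) : Prop :=
  forall (f : C) (y z : V), xi (f *: y + z) = f * xi y + xi z.

Definition R_linear (T : V -> V) : Prop :=
  forall (r : R) (y z : V), T (r%:A *: y + z) = r%:A *: T y + T z.

Definition is_cdo (X : V -> V) (x : C -> C) : Prop :=
  is_vector_field x /\ R_linear X /\
  forall (f : C) (y : V), X (f *: y) = f *: X y + x f *: y.

(* action of a covariant differential operator on Gamma(A^* ) *)
Definition cdo_dual (X : V -> V) (x : C -> C) (xi : V -> C) : V -> C :=
  fun y => x (xi y) - xi (X y).

Definition covectors_independent n (xi : 'I_n -> V -> C) : Prop :=
  forall c : 'I_n -> C, (forall y, \sum_(i < n) c i * xi i y = 0) ->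
    forall i, c i = 0.

Definition anchor_of n (xi : 'I_n -> V -> C) (x : 'I_n -> C -> C)
  (y : V) : C -> C := fun f => \sum_(i < n) xi i y * x i f.

Definition bracket_of n (xi : 'I_n -> V -> C) (X : 'I_n -> V -> V)
  (y z : V) : V := \sum_(i < n) (xi i y *: X i z - xi i z *: X i y).

Definition dull_algebroid (br : V -> V -> V) (anc : V -> C -> C) : Prop :=
  (* a_A is a bundle map A -> TM: C-linear with values in vector fields *)
  (forall y, is_vector_field (anc y)) /\
  (forall (f : C) (y z : V) (g : C), anc (f *: y + z) g = f * anc y g + anc z g) /\
  (forall (r : R) (y z w : V), br (r%:A *: y + z) w = r%:A *: br y w + br z w) /\
  (forall (r : R) (y z w : V), br w (r%:A *: y + z) = r%:A *: br w y + br w z) /\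
  (forall y z, br y z = - br z y) /\
  (forall (f : C) (y z : V), br y (f *: z) = f *: br y z + anc y f *: z) /\
  (forall y z, anc (br y z) = vf_bracket (anc y) (anc z)).

End Defs.

(* Main.v *)
Require Import Defs.
From HB Require Import structures.
From mathcomp Require Import all_boot all_order all_algebra.
From mathcomp Require Import ring.
From Stdlib Require Import FunctionalExtensionality.
Import GRing.Theory.
Local Open Scope ring_scope.
Section H.
Context {R : fieldType} {C : comAlgType R} {V : lmodType C}.
Implicit Types (xi : V -> C) (d : C -> C).
Lemma covD {xi} : is_covector xi -> forall y z, xi (y+z) = xi y + xi z.
Proof. by move=> H y z; rewrite -[y in LHS]scale1r H mul1r. Qed.
Lemma cov0 {xi} : is_covector xi -> xi 0 = 0.
Proof. by move=> H; apply: (addrI (xi 0)); rewrite addr0 -covD // addr0. Qed.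
Lemma covZ {xi} : is_covector xi -> forall f y, xi (f *: y) = f * xi y.
Proof. by move=> H f y; rewrite -[f *: y]addr0 H cov0 // addr0. Qed.
Lemma covN {xi} : is_covector xi -> forall y, xi (- y) = - xi y.
Proof. by move=> H y; rewrite -scaleN1r covZ // mulN1r. Qed.
Lemma covB {xi} : is_covector xi -> forall y z, xi (y - z) = xi y - xi z.
Proof. by move=> H y z; rewrite covD // covN. Qed.
Lemma cov_sum {xi} {n} (F : 'I_n -> V) : is_covector xi -> xi (\sum_(i < n) F i) = \sum_(i < n) xi (F i).
Proof. move=> H; elim/big_rec2: _ => [|i a b _ <-]; [exact: cov0| exact: covD]. Qed.
Lemma vfD {d} : is_vector_field d -> forall f g, d (f + g) = d f + d g.
Proof. by move=> [H _] f g; rewrite -[f in LHS]scale1r H scale1r. Qed.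
Lemma vf0 {d} : is_vector_field d -> d 0 = 0.
Proof. by move=> H; apply: (addrI (d 0)); rewrite addr0 -vfD // addr0. Qed.
Lemma vf_sum {d} {n} (F : 'I_n -> C) : is_vector_field d -> d (\sum_(i < n) F i) = \sum_(i < n) d (F i).
Proof. move=> H; elim/big_rec2: _ => [|i a b _ <-]; [exact: vf0| exact: vfD]. Qed.
Lemma vfM {d} : is_vector_field d -> forall f g, d (f * g) = f * d g + d f * g.
Proof. by case. Qed.
Lemma RlinD {T : V -> V} : R_linear T -> forall y z, T (y + z) = T y + T z.
Proof. by move=> H y z; rewrite -[y in LHS]scale1r -(scale1r (1 : C)) H !scale1r. Qed.
End H.
Lemma key {K : comRingType} n (p q g : 'I_n -> K) (P Q D : 'I_n -> 'I_n -> K)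
  (a : 'I_n -> 'I_n -> 'I_n -> K)
  (Hb : forall i j, D i j - D j i = \sum_(k < n) (a j i k - a i j k) * g k) :
  \sum_(j < n) (\sum_(i < n) (p i * (Q i j - \sum_(k < n) a i k j * q k)
                            - q i * (P i j - \sum_(k < n) a i k j * p k))) * g j
  = \sum_(i < n) p i * (\sum_(j < n) (q j * D i j + Q i j * g j))
    - \sum_(i < n) q i * (\sum_(j < n) (p j * D i j + P i j * g j)).
Proof.
set S1 := \sum_(i < n) \sum_(j < n) (p i * Q i j - q i * P i j) * g j.
have -> : \sum_(i < n) p i * (\sum_(j < n) (q j * D i j + Q i j * g j))
    - \sum_(i < n) q i * (\sum_(j < n) (p j * D i j + P i j * g j))
    = S1 + \sum_(i < n) \sum_(j < n) p i * q j * (D i j - D j i).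
  have E2 : \sum_(i < n) q i * (\sum_(j < n) (p j * D i j + P i j * g j))
     = \sum_(i < n) \sum_(j < n) (q i * P i j * g j + p i * q j * D j i).
    have -> : \sum_(i < n) \sum_(j < n) (q i * P i j * g j + p i * q j * D j i)
       = \sum_(i < n) \sum_(j < n) (q i * P i j * g j) + \sum_(i < n) \sum_(j < n) (p i * q j * D j i).
      by rewrite -big_split; apply: eq_bigr => i _; rewrite big_split.
    rewrite [X in _ + X]exchange_big /= -big_split; apply: eq_bigr => i _.
    rewrite mulr_sumr -big_split; apply: eq_bigr => j _ /=; ring.
  rewrite E2 /S1 -big_split -sumrB; apply: eq_bigr => i _ /=.
  rewrite mulr_sumr -sumrB -big_split; apply: eq_bigr => j _ /=; ring.
have -> : \sum_(j < n) (\sum_(i < n) (p i * (Q i j - \sum_(k < n) a i k j * q k)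
                            - q i * (P i j - \sum_(k < n) a i k j * p k))) * g j
  = S1 + \sum_(j < n) \sum_(i < n) \sum_(k < n) (q i * p k - p i * q k) * a i k j * g j.
  rewrite /S1 exchange_big -big_split; apply: eq_bigr => j _ /=.
  rewrite mulr_suml -big_split; apply: eq_bigr => i _ /=.
  have E : \sum_(k < n) (q i * p k - p i * q k) * a i k j * g j
     = (q i * \sum_(k < n) a i k j * p k - p i * \sum_(k < n) a i k j * q k) * g j.
    rewrite !mulr_sumr -sumrB mulr_suml; apply: eq_bigr => k _; ring.
  rewrite E; ring.
congr (_ + _).
under [RHS]eq_bigr => i _ do under eq_bigr => j _ do rewrite Hb mulr_sumr.
have -> : \sum_(j < n) \sum_(i < n) \sum_(k < n) (q i * p k - p i * q k) * a i k j * g j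
  = \sum_(j < n) \sum_(i < n) \sum_(k < n) (q i * p k * a i k j * g j)
  - \sum_(j < n) \sum_(i < n) \sum_(k < n) (p i * q k * a i k j * g j).
  rewrite -sumrB; apply: eq_bigr => j _; rewrite -sumrB; apply: eq_bigr => i _.
  rewrite -sumrB; apply: eq_bigr => k _; ring.
have -> : \sum_(i < n) \sum_(j < n) \sum_(k < n) p i * q j * ((a j i k - a i j k) * g k)
  = \sum_(i < n) \sum_(j < n) \sum_(k < n) (p i * q j * a j i k * g k)
  - \sum_(i < n) \sum_(j < n) \sum_(k < n) (p i * q j * a i j k * g k).
  rewrite -sumrB; apply: eq_bigr => j _; rewrite -sumrB; apply: eq_bigr => i _.
  rewrite -sumrB; apply: eq_bigr => k _; ring.
congr (_ - _).
  under eq_bigr => j _ do rewrite exchange_big /=.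
  rewrite exchange_big /=.
  under eq_bigr => j _ do rewrite exchange_big /=.
  by apply: eq_bigr => i1 _; apply: eq_bigr => i2 _; apply: eq_bigr => i3 _; ring.
rewrite exchange_big /=.
under eq_bigr => j _ do rewrite exchange_big /=.
  by apply: eq_bigr => i1 _; apply: eq_bigr => i2 _; apply: eq_bigr => i3 _; ring.
Qed.

Theorem proposition2p10 (R : fieldType) (C : comAlgType R) (V : lmodType C)
  (n : nat) (xi : 'I_n -> V -> C) (X : 'I_n -> V -> V) (x : 'I_n -> C -> C)
  (a : 'I_n -> 'I_n -> 'I_n -> C)
  (Hxi : forall i, is_covector (xi i))
  (Hind : covectors_independent xi)
  (HX : forall i, is_cdo (X i) (x i))
  (Ha : forall i j (y : V),
     cdo_dual (X i) (x i) (xi j) y = \sum_(k < n) a i k j * xi k y)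
  (Hb : forall i j (f : C),
     vf_bracket (x i) (x j) f = \sum_(k < n) (a j i k - a i j k) * x k f) :
  dull_algebroid (bracket_of xi X) (anchor_of xi x).
Proof.
have Hv i : is_vector_field (x i) by case: (HX i).
have HR i : R_linear (X i) by case: (HX i) => _ [].
have HL i : forall f y, X i (f *: y) = f *: X i y + x i f *: y by case: (HX i) => _ [].
have Hd i j y : xi j (X i y) = x i (xi j y) - \sum_(k < n) a i k j * xi k y.
  by rewrite -Ha /cdo_dual opprB addrC subrK.
split.
  move=> y; split.
    move=> r f g; rewrite /anchor_of scaler_sumr -big_split /=; apply: eq_bigr => i _.
    by case: (Hv i) => -> _; rewrite mulrDr scalerAr.
  move=> f g; rewrite /anchor_of mulr_sumr mulr_suml -big_split /=; apply: eq_bigr => i _.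
  rewrite (vfM (Hv i)); ring.
split.
  move=> f y z g; rewrite /anchor_of mulr_sumr -big_split /=; apply: eq_bigr => i _.
  rewrite (Hxi i); ring.
split.
  move=> r y z w; rewrite /bracket_of scaler_sumr -big_split /=; apply: eq_bigr => i _.
  rewrite (Hxi i) (HR i) scalerDl scalerDr -scalerA scalerBr !scalerA [xi i w * _]mulrC.
  by rewrite -!scalerA addrACA opprD.
split.
  move=> r y z w; rewrite /bracket_of scaler_sumr -big_split /=; apply: eq_bigr => i _.
  rewrite (Hxi i) (HR i) scalerDl scalerDr -scalerA scalerBr !scalerA [xi i w * _]mulrC.
  by rewrite -!scalerA addrACA opprD.
split.
  by move=> y z; rewrite /bracket_of -sumrN; apply: eq_bigr => i _; rewrite opprB.
split.
  move=> f y z; rewrite /bracket_of scaler_sumr scaler_suml -big_split /=; apply: eq_bigr => i _.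
  rewrite (HL i) (covZ (Hxi i)) scalerDr scalerBr !scalerA mulrC -!scalerA.
  by rewrite addrAC.
move=> y z; apply: functional_extensionality => f.
rewrite /anchor_of /vf_bracket /bracket_of.
under eq_bigr => j _ do rewrite (cov_sum _ (Hxi j)).
under eq_bigr => j _ do under eq_bigr => i _ do rewrite (covB (Hxi j)) !(covZ (Hxi j)) !Hd.
under [X in X - _]eq_bigr => i _ do rewrite (vf_sum _ (Hv i)).
under [X in _ - X]eq_bigr => i _ do rewrite (vf_sum _ (Hv i)).
under [X in X - _]eq_bigr => i _ do under eq_bigr => j _ do rewrite (vfM (Hv i)).
under [X in _ - X]eq_bigr => i _ do under eq_bigr => j _ do rewrite (vfM (Hv i)).
apply: (@key _ n _ _ _ _ _ (fun i j => x i (x j f))).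
by move=> i j; exact: Hb.
Qed.
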